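(* For every $q\in\mathbb N$, \[ \frac{2^{4q}}{2q\binom{2q}{q}}=\sum_{l=0}^{q} \binom{2l}{l} \binom{2q-2l}{q-l} \frac{1}{(2l-1)^2}. \] *)

(* Defs.v *)
From mathcomp Require Import all_boot all_order all_algebra.
Set Implicit Arguments. Unset Strict Implicit. Unset Printing Implicit Defensive.

(* Main.v *)
Require Import Defs.
From mathcomp Require Import all_boot all_order all_algebra.
From mathcomp Require Import ring lra zify.
Import Order.TTheory GRing.Theory Num.Theory.
Local Open Scope ring_scope.

Lemma ccS_nat n : (n.+1 * 'C(2 * n.+1, n.+1) = 2 * (2 * n).+1 * 'C(2*n, n))%N.
Proof.
have h1 := mul_bin_diag (2*n.+1) n.
have h2 := mul_bin_left (2 * n).+1 n.
have h3 := mul_bin_diag (2 * n).+1 n.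
have e1 : ((2*n.+1).-1 = (2 * n).+1)%N by rewrite mulnS.
have e2 : ((2 * n).+1 - n = n.+1)%N by lia.
rewrite e1 in h1; rewrite e2 in h2; rewrite /= in h3.
move: h1 h2 h3.
set a := 'C(2 * n.+1, n.+1); set b := 'C((2 * n).+1, n); set c := 'C((2 * n).+1, n.+1); set d := 'C(2*n, n).
move=> h1 h2 h3.
apply/eqP; rewrite -(eqn_pmul2l (ltn0Sn n)); apply/eqP; nia.
Qed.

Definition cc (n : nat) : rat := ('C(2*n, n))%:R.

Lemma cc_neq0 n : cc n != 0.
Proof. by rewrite /cc pnatr_eq0 -lt0n bin_gt0 leq_pmull. Qed.

Lemma natS_neq0 n : (n%:R + 1 : rat) != 0.
Proof. by rewrite natr1 pnatr_eq0. Qed.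

Lemma odd_neq0 n : (2 * n%:R + 1 : rat) != 0.
Proof. by rewrite -natrM natr1 pnatr_eq0. Qed.

Lemma oddm_neq0 n : (2 * n%:R - 1 : rat) != 0.
Proof. rewrite subr_eq0 -natrM (_ : 1 = 1%:R) // eqr_nat; apply/eqP; lia. Qed.

Lemma ccS n : cc n.+1 = 2 * (2 * n%:R + 1) / (n%:R + 1) * cc n.
Proof.
have := congr1 (fun m => m%:R : rat) (ccS_nat n).
rewrite /= !natrM -natr1 /cc => h.
have h0 := natS_neq0 n.
apply: (mulfI h0). rewrite h. field. done.
Qed.

Lemma alg (x y c d : rat) :
  x + y != 0 -> x + y + 1 != 0 -> 2 * x - 1 != 0 -> 2 * x + 1 != 0 ->
  x + 1 != 0 -> y + 1 != 0 ->
  (2 * (x + y) + 1) * (c * (2 * (2 * y + 1) / (y + 1) * d)) / (2 * x - 1) ^+ 2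
  - 8 * (x + y) * (c * d / (2 * x - 1) ^+ 2)
  = (2 * (2 * x + 1) / (x + 1) * c) * d * ((x + 1) * (x + y + 2 - 2 * (x + 1)))
      / ((x + y) * (x + y + 1) * (2 * (x + 1) - 1))
    - c * (2 * (2 * y + 1) / (y + 1) * d) * (x * (x + y + 2 - 2 * x))
      / ((x + y) * (x + y + 1) * (2 * x - 1)).
Proof.
move=> h1 h2 h3 h4 h5 h6.
have h7 : 2 * (x + 1) - 1 != 0 by rewrite (_ : 2 * (x + 1) - 1 = 2 * x + 1) //; ring.
field. by rewrite h1 h2 h3 h5 h6 h7.
Qed.

Definition Ft (q l : nat) : rat := cc l * cc (q - l) / ((2 * l)%:R - 1) ^+ 2.
Definition Gt (q l : nat) : rat :=
  cc l * cc (q.+1 - l) * (l%:R * ((q + 2)%:R - 2 * l%:R))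
  / (q%:R * (q.+1)%:R * ((2 * l)%:R - 1)).

Lemma pointwise (q l : nat) : (1 <= q)%N -> (l <= q)%N ->
  (2 * q + 1)%:R * Ft q.+1 l - (8 * q)%:R * Ft q l = Gt q l.+1 - Gt q l.
Proof.
move=> hq hl.
have [k hk] : exists k, q = (l + k)%N by exists (q - l)%N; rewrite subnKC.
subst q.
rewrite /Ft /Gt.
have -> : ((l + k).+1 - l = k.+1)%N by lia.
have -> : ((l + k).+1 - l.+1 = k)%N by lia.
have -> : ((l + k) - l = k)%N by lia.
rewrite !ccS.
have h := alg (l%:R) (k%:R) (cc l) (cc k).
rewrite !(natrD, natrM) -?natr1 ?natrD; field.
rewrite -?natr1 ?(natrD, natrM).
rewrite (_ : (0 + 1 + 1 : rat) = 2) //.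
rewrite oddm_neq0 !natS_neq0 (_ : 2 * (l%:R + 1) - 1 = 2 * l%:R + 1 :> rat); last by ring.
rewrite odd_neq0 -natrD natS_neq0 pnatr_eq0 /=. rewrite andbT; apply/eqP; lia.
Qed.

Definition S (q : nat) : rat := \sum_(0 <= l < q.+1) Ft q l.

Lemma last_term q : (1 <= q)%N ->
  (2 * q + 1)%:R * Ft q.+1 q.+1 = - Gt q q.+1.
Proof.
move=> hq.
rewrite /Ft /Gt subnn (_ : cc 0 = 1); last by rewrite /cc.
have hq0 : (q%:R : rat) != 0 by rewrite pnatr_eq0 -lt0n.
have h1 := natS_neq0 q. have h2 := odd_neq0 q.
rewrite !(natrD, natrM) -!natr1 ?natrD.
field.
rewrite (_ : 2 * (q%:R + 1) - 1 = 2 * q%:R + 1 :> rat); last by ring.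
by rewrite h1 h2 hq0.
Qed.

Lemma stepS q : (1 <= q)%N -> (2 * q + 1)%:R * S q.+1 = (8 * q)%:R * S q.
Proof.
move=> hq.
have tel := @telescope_sumr_eq _ 0 q.+1 (Gt q)
   (fun l => (2 * q + 1)%:R * Ft q.+1 l - (8 * q)%:R * Ft q l) (leq0n _)
   (fun k hk => pointwise q k hq (ltnSE (proj2 (andP hk)))).
rewrite sumrB -!mulr_sumr in tel.
rewrite /S big_nat_recr //= mulrDr last_term //.
have g0 : Gt q 0 = 0 by rewrite /Gt mul0r mulr0 mul0r.
rewrite g0 subr0 in tel.
move/eqP: tel; rewrite subr_eq => /eqP ->.
ring.
Qed.

Definition Rr (q : nat) : rat := (2 ^ (4 * q))%:R / ((2 * q)%:R * cc q).

Lemma stepR q : (1 <= q)%N -> (2 * q + 1)%:R * Rr q.+1 = (8 * q)%:R * Rr q.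
Proof.
move=> hq.
rewrite /Rr ccS (_ : (4 * q.+1 = 4 * q + 4)%N); last by lia.
rewrite expnD natrM.
have hq0 : (q%:R : rat) != 0 by rewrite pnatr_eq0 -lt0n.
have h1 := natS_neq0 q. have h2 := odd_neq0 q. have h3 := cc_neq0 q.
rewrite !(natrD, natrM) -!natr1 ?natrD.
field.
by rewrite -/(cc q) h3 hq0 h1 h2.
Qed.

Lemma SR q : (1 <= q)%N -> S q = Rr q.
Proof.
elim: q => [//|q IH] _.
case: q IH => [_|q IH].
  by rewrite /S /Rr !big_nat_recr //= big_geq // /Ft.
have hq : (1 <= q.+1)%N by [].
have := stepS q.+1 hq; rewrite (IH hq) -(stepR q.+1 hq) => /mulfI -> //.
by rewrite pnatr_eq0 addn1.
Qed.

Theorem lemma5p3 (q : nat) (hq : (1 <= q)%N) :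
  (2 ^ (4 * q))%:R / ((2 * q)%:R * ('C(2 * q, q))%:R)
  = \sum_(0 <= l < q.+1)
      ('C(2 * l, l))%:R * ('C(2 * q - 2 * l, q - l))%:R
        / (((2 * l)%:R - 1) ^+ 2) :> rat.
Proof.
rewrite -/(cc q) -/(Rr q) -SR // /S.
apply: eq_bigr => l _.
by rewrite /Ft -mulnBr.
Qed.
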